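(* For every fixed $d>1$ there exists $L>0$ such that, with $p=d/n$, a.a.s. every set $S\subseteq V_n$ inducing a connected subgraph of $G_{n,p}$ with $|S|\ge\ln n$ satisfies $d(S)\le L|S|$.
   Context: $G_{n,p}$ is the random graph on $V_n=\{1,\dots,n\}$ with each possible edge present independently with probability $p$; a.a.s. means with probability tending to $1$; $d(S)=\sum_{v\in S}d(v)$ is the sum of the degrees in $G_{n,p}$ of the vertices of $S$. *)

(* Defs.v *)
From HB Require Import structures.
From mathcomp Require Import all_boot all_order all_algebra.
From mathcomp Require Import reals exp.
Set Implicit Arguments. Unset Strict Implicit. Unset Printing Implicit Defensive.
Import Order.TTheory GRing.Theory Num.Theory.
Local Open Scope ring_scope.

(* A graph on V_n = 'I_n is encoded by its edge set: a set of pairs (i,j)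
   with i < j.  [gpairs n] is the set of all possible edges. *)
Definition gpairs (n : nat) : {set 'I_n * 'I_n} :=
  [set ij : 'I_n * 'I_n | (nat_of_ord ij.1 < nat_of_ord ij.2)%N].

Definition gadj (n : nat) (G : {set 'I_n * 'I_n}) : rel 'I_n :=
  fun u v => ((u, v) \in G) || ((v, u) \in G).

Definition gdeg (n : nat) (G : {set 'I_n * 'I_n}) (v : 'I_n) : nat :=
  #|[set u | gadj G v u]|.

Definition gdegsum (n : nat) (G : {set 'I_n * 'I_n}) (S : {set 'I_n}) : nat :=
  (\sum_(v in S) gdeg G v)%N.

Definition induces_connected (n : nat) (G : {set 'I_n * 'I_n}) (S : {set 'I_n}) : bool :=
  (S != set0) &&
  [forall u in S, forall v in S,
     connect [rel x y | [&& x \in S, y \in S & gadj G x y]] u v].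

(* Probability of an event E in G_{n,p}: each of the C(n,2) possible edges is
   present independently with probability p. *)
Definition Gnp_prob (R : realType) (n : nat) (p : R)
    (E : pred {set 'I_n * 'I_n}) : R :=
  \sum_(G : {set 'I_n * 'I_n} | (G \subset gpairs n) && E G)
     p ^+ #|G| * (1 - p) ^+ (#|gpairs n| - #|G|).

(* Main.v *)
Require Import Defs.
From HB Require Import structures.
From mathcomp Require Import all_boot all_order all_algebra.
From mathcomp Require Import reals exp.
From mathcomp Require Import zify ring lra.
From mathcomp Require sequences.
Set Implicit Arguments. Unset Strict Implicit. Unset Printing Implicit Defensive.
Import Order.TTheory GRing.Theory Num.Theory.
Local Open Scope ring_scope.
Local Notation expR := (@sequences.expR _).
Section P1.
Variable R : realType.

Lemma sum_subsets_card (T : finType) (U : {set T}) (F : nat -> R) :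
  \sum_(H : {set T} | H \subset U) F #|H| =
  \sum_(k < #|U|.+1) F k *+ 'C(#|U|, k).
Proof.
rewrite (partition_big (fun H : {set T} => (inord #|H| : 'I_#|U|.+1)) predT) //=.
apply: eq_bigr => k _.
have -> : \sum_(H : {set T} | (H \subset U) && (inord #|H| == k)) F #|H|
        = \sum_(H in [set A : {set T} | A \subset U & #|A| == k]) F k.
  apply: eq_big => H.
    rewrite inE; case HU: (H \subset U) => //=.
    have := subset_leq_card HU => le.
    by rewrite -val_eqE /= inordK.
  by case/andP => HU /eqP <-; rewrite inordK // ltnS subset_leq_card.
by rewrite sumr_const cards_draws.
Qed.

Lemma sum_subsets_binom (T : finType) (U : {set T}) (x y : R) :
  \sum_(H : {set T} | H \subset U) x ^+ #|H| * y ^+ (#|U| - #|H|) = (x + y) ^+ #|U|.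
Proof.
rewrite (sum_subsets_card U (fun k => x ^+ k * y ^+ (#|U| - k))).
by rewrite addrC exprDn; apply: eq_bigr => i _; rewrite mulrC.
Qed.

Variables (n : nat) (p : R).
Hypotheses (p0 : 0 <= p) (p1 : p <= 1).
Local Notation gp := (gpairs n).
Local Notation w G := (p ^+ #|G| * (1 - p) ^+ (#|gp| - #|G|)).

Lemma w_ge0 (G : {set 'I_n * 'I_n}) : 0 <= w G.
Proof. by rewrite mulr_ge0 // exprn_ge0 // subr_ge0. Qed.

Lemma Gnp_total : Gnp_prob p (fun _ : {set 'I_n * 'I_n} => true) = 1.
Proof.
rewrite /Gnp_prob; under eq_bigl => G do rewrite andbT.
by rewrite sum_subsets_binom addrC subrK expr1n.
Qed.

Lemma Gnp_compl (E : pred {set 'I_n * 'I_n}) :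
  Gnp_prob p E = 1 - Gnp_prob p (predC E).
Proof.
rewrite -Gnp_total /Gnp_prob [X in _ = X - _](bigID E) /=.
rewrite [X in _ = X + _ - _](eq_bigl (fun G : {set 'I_n * 'I_n} => (G \subset gp) && E G)); last by move=> G; rewrite andbT.
rewrite [X in _ = _ + X - _](eq_bigl (fun G : {set 'I_n * 'I_n} => (G \subset gp) && ~~ E G)); last by move=> G; rewrite andbT.
by rewrite addrK.
Qed.

Lemma Gnp_sub (W : {set 'I_n * 'I_n}) : W \subset gp ->
  Gnp_prob p (fun G : {set 'I_n * 'I_n} => W \subset G) = p ^+ #|W|.
Proof.
move=> Wgp; rewrite /Gnp_prob.
rewrite (reindex_onto (fun H => W :|: H) (fun G => G :\: W)) /=; last first.
  by move=> G /andP[_ WG]; rewrite setDE setUIr setUCr setIT; apply/setUidPr.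
rewrite (eq_bigl (fun H : {set 'I_n * 'I_n} => H \subset gp :\: W)); last first.
  move=> H; apply/idP/idP.
    case/andP => /andP[/subUsetP[_ Hgp] _] /eqP <-.
    apply/subsetP => x; rewrite in_setD in_setU => /andP[xW]; rewrite (negbTE xW) /= => xH.
    rewrite in_setD xW /=; exact: (subsetP Hgp).
  move=> /subsetP HgpW.
  have HW : [disjoint H & W].
    rewrite disjoint_subset; apply/subsetP => x /HgpW; by rewrite !inE => /andP[].
  rewrite subsetUl andbT; apply/andP; split.
    rewrite subUset Wgp /=; apply/subsetP => x /HgpW; by rewrite inE => /andP[].
  by rewrite setDUl setDv set0U; apply/eqP/setDidPl.
have E1 : (p + (1 - p)) ^+ #|gp :\: W| = 1 by rewrite addrC subrK expr1n.
rewrite -[RHS]mulr1 -[X in _ = _ * X]E1 -(sum_subsets_binom (gp :\: W) p (1 - p)) mulr_sumr.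
apply: eq_bigr => H HgpW.
have HW : [disjoint W & H].
  rewrite disjoint_sym disjoint_subset; apply/subsetP => x /(subsetP HgpW); by rewrite !inE => /andP[].
have cWH : #|W :|: H| = (#|W| + #|H|)%N.
  by rewrite cardsU (disjoint_setI0 HW) cards0 subn0.
have cgW : #|gp :\: W| = (#|gp| - #|W|)%N.
  by rewrite cardsD (setIidPr Wgp).
by rewrite cWH cgW exprD subnDA mulrA.
Qed.

Lemma Gnp_cond (Q : pred {set 'I_n * 'I_n}) :
  Gnp_prob p Q = \sum_(G : {set 'I_n * 'I_n} | G \subset gp) (Q G)%:R * w G.
Proof.
rewrite /Gnp_prob big_mkcondr /=; apply: eq_bigr => G _.
by case: (Q G); rewrite ?mul1r ?mul0r.
Qed.

Lemma Gnp_union (I : finType) (P : pred I) (W : I -> {set 'I_n * 'I_n})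
    (E : pred {set 'I_n * 'I_n}) :
  (forall G : {set 'I_n * 'I_n}, G \subset gp -> E G -> exists2 i, P i & W i \subset G) ->
  Gnp_prob p E <= \sum_(i | P i) Gnp_prob p (fun G : {set 'I_n * 'I_n} => W i \subset G).
Proof.
move=> HE; rewrite Gnp_cond.
under [X in _ <= X]eq_bigr => i _ do rewrite Gnp_cond.
rewrite exchange_big /=; apply: ler_sum => G Ggp.
case EG: (E G); last first.
  by rewrite mul0r; apply: sumr_ge0 => i _; rewrite mulr_ge0 ?ler0n ?w_ge0.
have [i Pi WiG] := HE G Ggp EG.
rewrite (bigD1 i) //= WiG mul1r lerDl.
by apply: sumr_ge0 => j _; rewrite mulr_ge0 ?ler0n ?w_ge0.
Qed.
End P1.
Section P2.
Variable n : nat.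
Implicit Types (G : {set 'I_n * 'I_n}) (S X : {set 'I_n}).

Definition edge (u v : 'I_n) : 'I_n * 'I_n := if (u < v)%N then (u, v) else (v, u).

Lemma edge_comp (u v a b : 'I_n) : edge u v = edge a b -> u = a \/ u = b.
Proof.
rewrite /edge; case: ifP => _; case: ifP => _ [] ??; subst; by [left|right].
Qed.

Lemma edge_comp2 (u v a b : 'I_n) : edge u v = edge a b -> (a == u) || (a == v).
Proof.
rewrite /edge; case: ifP => _; case: ifP => _ [] ??; subst; by rewrite eqxx ?orbT.
Qed.

Lemma gadj_sym G : symmetric (gadj G).
Proof. by move=> u v; rewrite /gadj orbC. Qed.

Lemma edge_in G (u v : 'I_n) : G \subset gpairs n -> gadj G u v -> edge u v \in G.
Proof.
move=> /subsetP Gg; rewrite /gadj /edge; case/orP => H.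
  by move: (Gg _ H); rewrite inE /= => ->.
by move: (Gg _ H); rewrite inE /= => lt; rewrite ltnNge (ltnW lt).
Qed.

Lemma path_exit (e : rel 'I_n) X (a b : 'I_n) :
  connect e a b -> a \in X -> b \notin X ->
  exists x y, [/\ x \in X, y \notin X & e x y].
Proof.
case/connectP => s; elim: s a => [|c s IH] a /=.
  by move=> _ -> ->.
case/andP => eac ps E aX bX.
case cX: (c \in X).
  by apply: (IH c ps E cX bX).
by exists a, c; rewrite cX.
Qed.

Definition tree_inv G (r : 'I_n) X (f : {ffun 'I_n -> 'I_n}) :=
  [/\ r \in X, (forall v, v \notin X :\ r -> f v = r),
      (forall v, v \in X :\ r -> f v \in X /\ gadj G v (f v)) &
      {in X :\ r &, injective (fun v => edge v (f v))}].

Lemma grow G S (r : 'I_n) : induces_connected G S -> r \in S ->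
  forall m, (m < #|S|)%N -> exists X f, [/\ X \subset S, #|X| = m.+1 & tree_inv G r X f].
Proof.
case/andP => _ /forallP Hc rS; elim => [|m IH] ltm.
  exists [set r], [ffun => r]; split.
  - by rewrite sub1set.
  - by rewrite cards1.
  split; first by rewrite set11.
  - by move=> v _; rewrite ffunE.
  - by move=> v; rewrite setDv inE.
  - by move=> v; rewrite setDv inE.
have [X [f [XS cX [rX fout fin finj]]]] := IH (ltnW ltm).
have [y' /andP [y'X y'S]] : exists y', (y' \notin X) && (y' \in S).
  apply/existsP; apply: contraTT ltm; rewrite negb_exists => /forallP H.
  have : S \subset X by apply/subsetP => z zS; move: (H z); rewrite zS andbT negbK.
  by move/subset_leq_card; rewrite cX ltnNge => ->.
have := Hc r; rewrite rS /= => /forallP /(_ y'); rewrite y'S /= => conn.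
have [x [y [xX yX /and3P [xS yS axy]]]] := path_exit conn rX y'X.
exists (y |: X), [ffun v => if v == y then x else f v]; split.
- by rewrite subUset sub1set yS XS.
- by rewrite cardsU1 yX cX.
have yr : y != r by apply: contraNneq yX => ->.
split.
- by rewrite in_setU1 rX orbT.
- move=> v; rewrite ffunE; case: ifP => [/eqP -> | vy].
    by rewrite !inE eqxx yr.
  move=> H; apply: fout; apply: contra H; rewrite !inE => /andP [-> ->]; by rewrite orbT.
- move=> v H; rewrite ffunE; case: ifP => [/eqP -> | vy].
    by rewrite !inE xX orbT gadj_sym.
  have vX : v \in X :\ r.
    by move: H; rewrite !inE vy /= => /andP[-> ->].
  have [fX adj] := fin v vX; by rewrite in_setU1 fX orbT adj.
have sub : forall v, v \in (y |: X) :\ r -> v != y -> v \in X :\ r.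
  by move=> v; rewrite !inE => /andP[-> /orP[->|->]].
have ey : forall v, v \in X :\ r -> edge v (f v) != edge y x.
  move=> v vX; apply/negP => /eqP /edge_comp2 /orP [] /eqP E.
    by move: vX yX; rewrite inE E => /andP[_ ->].
  by move: (fin v vX) yX => [fX _]; rewrite E fX.
move=> v w vin win /=; rewrite !ffunE.
case: ifP => [/eqP -> | vy]; case: ifP => [/eqP -> | wy] //.
- by move=> E; move: (ey w (sub w win (negbT wy))); rewrite E eqxx.
- by move=> E; move: (ey v (sub v vin (negbT vy))); rewrite E eqxx.
by apply: finj; apply: sub => //; rewrite ?vy ?wy.
Qed.

Definition touch S := [set e in gpairs n | (e.1 \in S) || (e.2 \in S)].
Definition tree S (r : 'I_n) (f : {ffun 'I_n -> 'I_n}) := [set edge v (f v) | v in S :\ r].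

Lemma card_sum (T : finType) (P : pred T) : #|[set x | P x]| = (\sum_x (P x : nat))%N.
Proof. by rewrite -sum1dep_card big_mkcond /=; apply: eq_bigr => x _; case: (P x). Qed.

Lemma count_side G S (g : 'I_n -> 'I_n -> 'I_n * 'I_n) :
  G \subset gpairs n -> (forall u v, ((g u v).1 == u) || ((g u v).2 == u)) ->
  injective (fun uv : 'I_n * 'I_n => g uv.1 uv.2) ->
  (\sum_(v in S) \sum_u ((g v u \in G) : nat) <= #|G :&: touch S|)%N.
Proof.
move=> /subsetP Gg gc ginj.
rewrite big_mkcond /=.
rewrite (eq_bigr (fun v => \sum_u ((v \in S) && (g v u \in G) : nat))); last first.
  by move=> v _; case: (v \in S) => //; rewrite big1.
rewrite pair_big /= card_sum.
rewrite [X in (_ <= X)%N](reindex_inj ginj) /=.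
apply: leq_sum => [[v u]] _ /=.
case vS: (v \in S) => //=; case gG: (g v u \in G) => //=.
rewrite /touch in_set Gg //=; case/orP: (gc v u) => /eqP ->; by rewrite vS ?orbT.
Qed.

Lemma deg_bound G S : G \subset gpairs n ->
  (gdegsum G S <= 2 * #|G :&: touch S|)%N.
Proof.
move=> Gg; rewrite /gdegsum mul2n -addnn.
apply: (@leq_trans (\sum_(v in S) \sum_u (((v, u) \in G) : nat) +
                    \sum_(v in S) \sum_u (((u, v) \in G) : nat))%N).
  rewrite -big_split /=; apply: leq_sum => v _.
  rewrite /gdeg card_sum -big_split /=; apply: leq_sum => u _.
  by rewrite /gadj; case: ((v, u) \in G); case: ((u, v) \in G).
apply: leq_add.
  apply: (@count_side G S (fun v u => (v, u))) => //.
    by move=> u v; rewrite eqxx.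
  by move=> [a b] [c d].
apply: (@count_side G S (fun v u => (u, v))) => //.
  by move=> u v; rewrite eqxx orbT.
by move=> [a b] [c d] /= [-> ->].
Qed.

Lemma witness G S c : G \subset gpairs n -> induces_connected G S ->
  (2 * (c.+1 * #|S|) < gdegsum G S)%N ->
  exists r (f : {ffun 'I_n -> 'I_n}) (M : {set 'I_n * 'I_n}), [/\ r \in S, f \in pffun_on r (S :\ r) S, M \subset touch S,
     #|M| = (c * #|S|)%N &
     (tree S r f :|: M \subset G) && (#|tree S r f :|: M| == #|S|.-1 + c * #|S|)%N].
Proof.
move=> Gg Sc Hdeg.
have [r rS] : exists r, r \in S by apply/set0Pn; case/andP: Sc.
have Sgt0 : (0 < #|S|)%N by apply/card_gt0P; exists r.
have lt1 : (#|S|.-1 < #|S|)%N by rewrite ltn_predL.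
have [X [f [XS cX [rX fout fin finj]]]] := grow Sc rS lt1.
have XeS : X = S.
  by apply/eqP; rewrite eqEcard XS cX prednK // leqnn.
rewrite {}XeS in fout fin finj rX XS cX.
set T := tree S r f.
have TG : T \subset G :&: touch S.
  apply/subsetP => e /imsetP [v vS ->]; have [fS adj] := fin v vS.
  rewrite in_setI edge_in // /touch in_set (subsetP Gg) ?edge_in //=.
  move: vS; rewrite in_setD1 => /andP[_ vS].
  by rewrite /edge; case: ifP => _ /=; rewrite ?vS ?fS ?orbT.
have cT : #|T| = #|S|.-1.
  by rewrite card_in_imset // [#|S|](cardsD1 r) rS.
set A := (G :&: touch S) :\: T.
have cA : (c * #|S| <= #|A|)%N.
  have := leq_trans Hdeg (@deg_bound G S Gg).
  rewrite /A cardsD (setIidPr TG) cT ltn_pmul2l // mulSn => H.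
  move: H Sgt0; set t := #|G :&: touch S|; set k := #|S|; set ck := (c * k)%N; lia.
have [M] : exists M : {set 'I_n * 'I_n}, M \in [set M : {set 'I_n * 'I_n} | M \subset A & #|M| == (c * #|S|)%N].
  by apply/card_gt0P; rewrite cards_draws bin_gt0.
rewrite inE => /andP [MA /eqP cM].
have MGt : M \subset G :&: touch S by apply: subset_trans MA (subsetDl _ _).
exists r, f, M; split => //.
- apply/pffun_onP; split.
    by apply/subsetP => v; rewrite inE; apply: contraR => /fout ->; rewrite eqxx.
  by move=> _ /imageP [v vS ->]; have [] := fin v vS.
- by apply: subset_trans MGt (subsetIr _ _).
apply/andP; split.
  by rewrite subUset (subset_trans TG (subsetIl _ _)) (subset_trans MGt (subsetIl _ _)).
have TM : [disjoint T & M].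
  rewrite disjoint_sym disjoint_subset; apply: subset_trans MA _.
  by apply/subsetP => e; rewrite !inE => /andP[].
by rewrite cardsU (disjoint_setI0 TM) cards0 subn0 cT cM.
Qed.
End P2.

Section P3.
Variable R : realType.
Variables (n c : nat) (p : R).
Hypotheses (p0 : 0 <= p).

Definition Ityp := ((({set 'I_n} * 'I_n) * {ffun 'I_n -> 'I_n}) * {set 'I_n * 'I_n})%type.

Definition QS (S : {set 'I_n}) := ln (n%:R : R) <= (#|S|)%:R.
Definition Q1 (S : {set 'I_n}) (r : 'I_n) := r \in S.
Definition Q2 (Sr : {set 'I_n} * 'I_n) (f : {ffun 'I_n -> 'I_n}) :=
  f \in pffun_on Sr.2 (Sr.1 :\ Sr.2) Sr.1.
Definition Q3 (Srf : ({set 'I_n} * 'I_n) * {ffun 'I_n -> 'I_n}) (M : {set 'I_n * 'I_n}) :=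
  (M \subset touch Srf.1.1) && (#|M| == c * #|Srf.1.1|)%N.

Definition hh (k : nat) : R := p ^+ (k.-1 + c * k).

Lemma count_nested (F : {set 'I_n} -> R) (P : pred Ityp) :
  (forall S, 0 <= F S) ->
  (forall i, P i -> [&& QS i.1.1.1, Q1 i.1.1.1 i.1.1.2, Q2 i.1.1 i.1.2 & Q3 i.1 i.2]) ->
  \sum_(i | P i) F i.1.1.1 <=
  \sum_(S | QS S) F S * (#|S| * #|S| ^ (#|S|.-1) * 'C(#|touch S|, c * #|S|))%:R.
Proof.
move=> F0 HP.
apply: (@le_trans _ _ (\sum_(i : Ityp | [&& QS i.1.1.1, Q1 i.1.1.1 i.1.1.2, Q2 i.1.1 i.1.2 & Q3 i.1 i.2]) F i.1.1.1)).
  rewrite [X in X <= _]big_mkcond [X in _ <= X]big_mkcond /=.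
  apply: ler_sum => i _; case Pi: (P i); first by rewrite (HP i Pi).
  by case: ifP.
rewrite (eq_bigl (fun i : Ityp => [&& QS i.1.1.1, Q1 i.1.1.1 i.1.1.2 & Q2 i.1.1 i.1.2] && Q3 i.1 i.2)); last first.
  by move=> i; rewrite !andbA.
rewrite -(pair_big_dep (fun j => [&& QS j.1.1, Q1 j.1.1 j.1.2 & Q2 j.1 j.2]) Q3 (fun j M => F j.1.1)) /=.
rewrite (eq_bigl (fun j : ({set 'I_n} * 'I_n) * {ffun 'I_n -> 'I_n} => (QS j.1.1 && Q1 j.1.1 j.1.2) && Q2 j.1 j.2)); last first.
  by move=> i; rewrite !andbA.
rewrite -(pair_big_dep (fun j => QS j.1 && Q1 j.1 j.2) Q2 (fun j f => \sum_(M | Q3 (j, f) M) F j.1)) /=.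
rewrite -(pair_big_dep QS Q1 (fun S r => \sum_(f | Q2 (S, r) f) \sum_(M | Q3 ((S, r), f) M) F S)) /=.
apply: ler_sum => S QSS.
have eM : forall r f, \sum_(M | Q3 (S, r, f) M) F S = F S * ('C(#|touch S|, c * #|S|))%:R.
  move=> r f; rewrite (eq_bigl (fun M => M \in [set M : {set 'I_n * 'I_n} | (M \subset touch S) & (#|M| == c * #|S|)%N])); last first.
    by move=> M; rewrite inE.
  by rewrite sumr_const cards_draws mulr_natr.
under eq_bigr => r _ do under eq_bigr => f _ do rewrite eM.
have eF : forall r, r \in S -> \sum_(f | Q2 (S, r) f) (F S * ('C(#|touch S|, c * #|S|))%:R)
    = F S * ('C(#|touch S|, c * #|S|) * #|S| ^ #|S|.-1)%:R.
  move=> r rS; rewrite (eq_bigl (fun f => f \in pffun_on r (S :\ r) S)) //.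
  have cSr : #|S :\ r| = #|S|.-1 by rewrite [#|S|](cardsD1 r) rS.
  by rewrite sumr_const card_pffun_on cSr natrM mulrA [RHS]mulr_natr.
rewrite (eq_bigr _ eF) (eq_bigl (fun r => r \in S)) // sumr_const.
rewrite -[X in X <= _]mulr_natr !natrM le_eqVlt; apply/orP; left; apply/eqP; ring.
Qed.

Lemma touch_card (S : {set 'I_n}) : (#|touch S| <= 2 * #|S| * n)%N.
Proof.
have sub : touch S \subset setX S [set: 'I_n] :|: setX [set: 'I_n] S.
  apply/subsetP => -[a b]; rewrite /touch in_set => /andP[_ /orP[h|h]];
  by rewrite in_setU !in_setX h ?in_setT ?orbT.
apply: (leq_trans (subset_leq_card sub)); apply: (leq_trans (leq_card_setU _ _)).
by rewrite !cardsX cardsT card_ord [(n * _)%N]mulnC addnn -mul2n mulnA.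
Qed.

Lemma sum_sets (G : nat -> R) :
  \sum_(S : {set 'I_n} | QS S) G #|S| =
  \sum_(k < n.+1) (if ln (n%:R : R) <= k%:R then G k else 0) *+ 'C(n, k).
Proof.
rewrite big_mkcond /=.
rewrite (eq_bigl (fun S : {set 'I_n} => S \subset [set: 'I_n])); last by move=> S; rewrite subsetT.
by rewrite (sum_subsets_card [set: 'I_n] (fun k => if ln (n%:R : R) <= k%:R then G k else 0)) cardsT card_ord.
Qed.

Definition goodE (L : R) := fun G : {set 'I_n * 'I_n} =>
  [forall S : {set 'I_n},
     (induces_connected G S && (ln (n%:R : R) <= (#|S|)%:R)) ==>
     ((gdegsum G S)%:R <= L * (#|S|)%:R)].

Definition Wt (i : Ityp) := tree i.1.1.1 i.1.1.2 i.1.2 :|: i.2.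

Definition Pt (i : Ityp) := [&& QS i.1.1.1, Q1 i.1.1.1 i.1.1.2, Q2 i.1.1 i.1.2, Q3 i.1 i.2 &
   (Wt i \subset gpairs n) && (#|Wt i| == #|i.1.1.1|.-1 + c * #|i.1.1.1|)%N].

Lemma bad_bound (p1 : p <= 1) :
  Gnp_prob p (predC (goodE (2 * c.+1)%:R)) <=
  \sum_(k < n.+1) (if ln (n%:R : R) <= k%:R then hh k * (k ^ k * 'C(2 * k * n, c * k))%:R else 0) *+ 'C(n, k).
Proof.
apply: le_trans (@Gnp_union R n p p0 p1 _ Pt Wt _ _) _.
  move=> G Gg; rewrite /predC /goodE /= negb_forall => /existsP [S].
  rewrite negb_imply => /andP [/andP [Sc lnS] notle].
  have Hd : (2 * (c.+1 * #|S|) < gdegsum G S)%N.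
    by rewrite -(ltr_nat R) mulnA natrM ltNge.
  have [r [f [M [rS fP MT cM /andP[WG cW]]]]] := witness Gg Sc Hd.
  exists (((S, r), f), M); last by [].
  by rewrite /Pt /QS /Q1 /Q2 /Q3 /= lnS rS fP MT cM eqxx cW (subset_trans WG Gg).
rewrite [X in X <= _](eq_bigr (fun i : Ityp => hh #|i.1.1.1|)); last first.
  move=> i /and5P [_ _ _ _ /andP [Wg cW]].
  by rewrite Gnp_sub // (eqP cW).
apply: le_trans (@count_nested (fun S => hh #|S|) Pt _ _) _.
- by move=> S; rewrite /hh exprn_ge0.
- by move=> i /and5P [-> -> -> -> _].
apply: (@le_trans _ _ (\sum_(S : {set 'I_n} | QS S) (fun k => hh k * (k ^ k * 'C(2 * k * n, c * k))%:R) #|S|)).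
  apply: ler_sum => S _ /=; apply: ler_wpM2l; first by rewrite /hh exprn_ge0.
  rewrite ler_nat; apply: leq_mul.
    by case: #|S| => // k; rewrite expnS.
  exact: leq_bin2l (touch_card S).
by rewrite (sum_sets (fun k => hh k * (k ^ k * 'C(2 * k * n, c * k))%:R)).
Qed.
End P3.
Section P4.
Variable R : realType.
Local Notation e := (expR (1 : R)).

Lemma ffact_le N m : (N ^_ m <= N ^ m)%N.
Proof.
elim: m N => [|m IH] N //; rewrite ffactnS expnS leq_mul //.
apply: leq_trans (IH _) _; elim: m {IH} => // m IH; rewrite !expnS leq_mul //.
exact: leq_pred.
Qed.

Lemma fact_bound m : (m%:R : R) ^+ m <= e ^+ m * (m`!)%:R.
Proof.
case: m => [|m]; first by rewrite !expr0 mul1r.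
have := @expR_ge1Dxn R (m.+1)%:R m (ler0n _ _).
rewrite -expRM_natl mulr1 => H.
have f0 : (0 : R) < (m.+1)`!%:R by rewrite ltr0n fact_gt0.
rewrite -ler_pdivrMr //; apply: le_trans H; rewrite lerDr //.
Qed.

Lemma binom_bound N m : ('C(N, m))%:R * (m%:R : R) ^+ m <= (N%:R * e) ^+ m.
Proof.
apply: (@le_trans _ _ ('C(N, m)%:R * (e ^+ m * (m`!)%:R))).
  by rewrite ler_wpM2l // fact_bound.
rewrite mulrCA -natrM bin_ffact exprMn mulrC ler_wpM2r ?exprn_ge0 ?expR_ge0 //.
by rewrite -natrX ler_nat ffact_le.
Qed.

Lemma term_bound (d : R) (c n k : nat) : 1 <= d -> (0 < c)%N -> (0 < n)%N -> (0 < k)%N ->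
  (d / n%:R) ^+ (k.-1 + c * k) * (k ^ k * 'C(2 * k * n, c * k))%:R * ('C(n, k))%:R
   <= n%:R * (e * d * (2 * e * d / c%:R) ^+ c) ^+ k.
Proof.
move=> d1 c0 n0; case: k => // k _; rewrite /=.
set nr : R := n%:R; set cr : R := c%:R; set x := d / nr.
have nr0 : 0 < nr by rewrite ltr0n.
have cr0 : 0 < cr by rewrite ltr0n.
have d0 : 0 < d by apply: lt_le_trans d1.
have e0 : 0 < e by apply: expR_gt0.
have x0 : 0 <= x by rewrite divr_ge0 // ltW.
set m := (c * k.+1)%N.
set y := 2 * e * d / cr.
have -> : x ^+ (k + m) * (k.+1 ^ k.+1 * 'C(2 * k.+1 * n, m))%:R * 'C(n, k.+1)%:R
    = (x ^+ k * ('C(n, k.+1) * k.+1 ^ k.+1)%:R) * (x ^+ m * 'C(2 * k.+1 * n, m)%:R).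
  by rewrite exprD !natrM; ring.
have ha : ('C(n, k.+1) * k.+1 ^ k.+1)%:R <= (nr * e) ^+ k.+1.
  by rewrite natrM natrX binom_bound.
have hb : ('C(2 * k.+1 * n, m))%:R <= (2 * e * nr / cr) ^+ m.
  have m0 : (0 : R) < m%:R by rewrite ltr0n muln_gt0 c0.
  have := binom_bound (2 * k.+1 * n) m.
  have -> : ((2 * k.+1 * n)%:R * e) = m%:R * (2 * e * nr / cr).
    rewrite /m /nr /cr !natrM; field; by rewrite lt0r_neq0.
  by rewrite exprMn mulrC ler_pM2l // exprn_gt0.
apply: le_trans (_ : (x ^+ k * (nr * e) ^+ k.+1) * (x ^+ m * (2 * e * nr / cr) ^+ m) <= _).
  apply: ler_pM; rewrite ?mulr_ge0 ?exprn_ge0 ?ler0n //.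
    by rewrite ler_wpM2l ?exprn_ge0.
  by rewrite ler_wpM2l ?exprn_ge0.
have -> : x ^+ m * (2 * e * nr / cr) ^+ m = (y ^+ c) ^+ k.+1.
  rewrite -exprMn -exprM /m /y /x; congr (_ ^+ _); field.
  by rewrite !lt0r_neq0.
have -> : x ^+ k * (nr * e) ^+ k.+1 = nr * e * (d * e) ^+ k.
  rewrite exprS mulrCA -exprMn /x; congr (_ * (_ ^+ _)); field; by rewrite lt0r_neq0.
have -> : (e * d * y ^+ c) ^+ k.+1 = (e * d) * (e * d) ^+ k * (y ^+ c) ^+ k.+1.
  by rewrite exprMn exprS.
rewrite [d * e]mulrC.
have Z0 : 0 <= (e * d) ^+ k by rewrite exprn_ge0 // mulr_ge0 // ltW.
have y0 : 0 <= y by rewrite /y divr_ge0 ?mulr_ge0 ?ltW.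
have Y0 : 0 <= (y ^+ c) ^+ k.+1 by rewrite !exprn_ge0.
rewrite !mulrA ler_wpM2r // ler_wpM2r // ler_peMr // mulr_ge0 ?ltW //.
Qed.

Lemma exists_nat_gt (x : R) : exists c : nat, x < c%:R.
Proof. by exists (Num.truncn x).+1; apply: truncnS_gt. Qed.

Lemma e_ge2 : 2 <= e.
Proof. by have := @expR_ge1Dx R 1. Qed.

Lemma choose_c (d : R) : 1 <= d ->
  exists c : nat, (0 < c)%N /\ e * d * (2 * e * d / c%:R) ^+ c * e ^+ 3 <= 1.
Proof.
move=> d1; have [c hc] := exists_nat_gt (e ^+ 4 * d).
have e2 := e_ge2; have e0 : 0 < e by apply: expR_gt0.
have d0 : 0 < d by apply: lt_le_trans d1.
have e3 : 8 <= e ^+ 3.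
  have : 2 ^+ 3 <= e ^+ 3 by rewrite lerXn2r // ?nnegrE ?ler0n ?ltW.
  by apply: le_trans; rewrite -natrX.
have C0 : 0 < (c%:R : R).
  by apply: lt_trans hc; rewrite mulr_gt0 ?exprn_gt0.
have c0 : (0 < c)%N by rewrite -(ltr0n R).
exists c; split => //.
set C : R := c%:R; set y := 2 * e * d / C.
have y0 : 0 <= y by rewrite /y divr_ge0 ?mulr_ge0 ?ltW.
have yh : y <= 2^-1.
  rewrite /y ler_pdivrMr // ler_pdivlMl ?ltr0n //; apply: le_trans (ltW hc).
  have -> : e ^+ 4 * d = e ^+ 3 * (e * d) by rewrite exprS; ring.
  have -> : 2 * (2 * e * d) = 4 * (e * d) by ring.
  rewrite ler_pM2r ?mulr_gt0 //.
  by apply: le_trans e3; rewrite ler_nat.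
have yc : y ^+ c <= C^-1.
  apply: (@le_trans _ _ (2^-1 ^+ c)); first by rewrite lerXn2r ?nnegrE ?invr_ge0 ?ler0n.
  rewrite exprVn lef_pV2 ?posrE ?exprn_gt0 // /C -natrX ler_nat.
  exact: ltnW (ltn_expl _ _).
apply: (@le_trans _ _ (e * d * C^-1 * e ^+ 3)).
  by rewrite ler_pM2r ?exprn_gt0 // ler_pM2l // mulr_gt0.
have -> : e * d * C^-1 * e ^+ 3 = (e ^+ 4 * d) / C by rewrite exprS; ring.
by rewrite ler_pdivrMr // mul1r ltW.
Qed.
End P4.
Unset Implicit Arguments.
Local Open Scope ring_scope.

Theorem lemma8 (R : realType) (d : R) (hd : 1 < d) :
  exists L : R, 0 < L /\
    forall eps : R, 0 < eps -> exists N : nat, forall n : nat, (N <= n)%N ->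
      1 - eps <=
      Gnp_prob (d / n%:R)
        (fun G : {set 'I_n * 'I_n} =>
           [forall S : {set 'I_n},
              (induces_connected G S && (ln (n%:R : R) <= (#|S|)%:R)) ==>
              ((gdegsum G S)%:R <= L * (#|S|)%:R)]).
Proof.
have d1 : 1 <= d := ltW hd.
have [c [c0 hq]] := choose_c d1.
exists (2 * c.+1)%:R; split; first by rewrite ltr0n.
move=> eps eps0.
have [N1 hN1] := exists_nat_gt d.
have [N2 hN2] := exists_nat_gt (2 / eps).
exists (maxn 2 (maxn N1 N2)) => n hn.
have n2 : (2 <= n)%N by move: hn; lia.
have nN1 : (N1 <= n)%N by move: hn; lia.
have nN2 : (N2 <= n)%N by move: hn; lia.
have n0 : (0 < n)%N by lia.
have nr0 : (0 : R) < n%:R by rewrite ltr0n.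
have d0 : 0 < d by apply: lt_le_trans d1.
have dn : d <= n%:R by apply: ltW; apply: lt_le_trans hN1 _; rewrite ler_nat.
have p0 : 0 <= d / n%:R by rewrite divr_ge0 ?ltW.
have p1 : d / n%:R <= 1 by rewrite ler_pdivrMr // mul1r.
rewrite Gnp_compl lerD2l lerN2.
apply: le_trans (@bad_bound R n c _ p0 p1) _.
apply: (@le_trans _ _ (\sum_(k < n.+1) ((n%:R : R) ^+ 2)^-1)).
  apply: ler_sum => k _; case: ifP => lnk; last by rewrite mul0rn invr_ge0 exprn_ge0 // ltW.
  have lnpos : 0 < ln (n%:R : R) by apply: ln_gt0; rewrite ltr1n.
  have k0 : (0 < k)%N by rewrite -(ltr0n R); apply: lt_le_trans lnk.
  rewrite -mulr_natr; apply: le_trans (term_bound d1 c0 n0 k0) _.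
  set q := _ * _ * _ ^+ c.
  have q0 : 0 <= q.
    rewrite /q !mulr_ge0 ?exprn_ge0 ?divr_ge0 ?mulr_ge0 ?ler0n ?ltW ?expR_gt0 //.
  have nk : (n%:R : R) <= expR 1 ^+ k.
    rewrite -(lnK (x := n%:R)) ?posrE // -expRM_natl mulr1 ler_expR //.
  rewrite -[X in _ <= X]div1r; rewrite ler_pdivlMr; last by rewrite exprn_gt0.
  have -> : n%:R * q ^+ k * n%:R ^+ 2 = q ^+ k * n%:R ^+ 3 by rewrite exprS; ring.
  apply: (@le_trans _ _ (q ^+ k * (expR 1 ^+ k) ^+ 3)).
    apply: (ler_wpM2l (exprn_ge0 _ q0)).
    by apply: lerXn2r => //; rewrite nnegrE ?exprn_ge0 ?ltW ?expR_gt0.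
  rewrite -exprM mulnC exprM -exprMn.
  apply: exprn_ile1; last exact: hq.
  by rewrite mulr_ge0 // exprn_ge0 // ltW // expR_gt0.
rewrite sumr_const card_ord -(mulr_natr ((n%:R : R) ^+ 2)^-1 n.+1).
have hN : 2 / eps < n%:R by apply: lt_le_trans hN2 _; rewrite ler_nat.
move: hN; rewrite ltr_pdivrMr // => hN.
rewrite mulrC ler_pdivrMr ?exprn_gt0 // -addn1 natrD.
have n1 : (1 : R) <= n%:R by rewrite ler1n; lia.
nra.
Qed.
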